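(* Let $\mathcal{C}\subseteq\{0,1\}^*$ be a full prefix-free codebook, i.e., $\mathcal{C}$ is prefix-free and $\sum_{k\in\mathcal{C}}2^{-|k|}=1$. Let $K$ be a random variable with probability mass function $p_K(k)=2^{-|k|}$ for $k\in\mathcal{C}$. Then $K$ is a randomly-stopped bit sequence.
   Context: $\{0,1\}^*:=\bigcup_{n\ge0}\{0,1\}^n$; for $K\in\{0,1\}^*$, $|K|$ is its length, $K_i$ its $i$-th entry, and $K^{j}=(K_1,\dots,K_j)$. A random $K\in\{0,1\}^*$ is a randomly-stopped bit sequence if $\mathbb{P}(K_n=k_n\mid |K|\ge n,\,K^{n-1}=k^{n-1})=1/2$ for all $n\ge1$ and all $k^n\in\{0,1\}^n$ with $\mathbb{P}(|K|\ge n,\,K^{n-1}=k^{n-1})>0$. *)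

(* Defs.v *)
From HB Require Import structures.
From mathcomp Require Import all_boot all_order all_algebra.
From mathcomp Require Import all_classical all_reals all_analysis.
Set Implicit Arguments. Unset Strict Implicit. Unset Printing Implicit Defensive.
Import Order.TTheory GRing.Theory Num.Theory.
Local Open Scope classical_set_scope.
Local Open Scope ring_scope.

(* Bit strings {0,1}^* are represented by [seq bool]; |k| = size k,
   K_i (1-indexed) = nth false K (i-1), K^j = take j K. *)

Definition prefix_free (C : set (seq bool)) : Prop :=
  forall k k', C k -> C k' -> prefix k k' -> k = k'.

Definition kraft_full (R : realType) (C : set (seq bool)) : Prop :=
  (\esum_(k in C) ((2%:R : R) ^- size k)%:E = 1)%E.

Definition full_prefix_free (R : realType) (C : set (seq bool)) : Prop :=
  prefix_free C /\ kraft_full R C.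

(* Events used in the definition (n is 1-indexed as in the paper, n >= 1):
   {|K| >= n, K^{n-1} = k^{n-1}}  and  {K_n = k_n}. *)
Definition ev_prefix {T : Type} (K : T -> seq bool) (n : nat) (kn : seq bool)
  : set T :=
  [set w | (n <= size (K w))%N /\ take n.-1 (K w) = take n.-1 kn].

Definition ev_bit {T : Type} (K : T -> seq bool) (n : nat) (kn : seq bool)
  : set T :=
  [set w | nth false (K w) n.-1 = nth false kn n.-1].

Definition randomly_stopped (d : measure_display) (T : measurableType d)
  (R : realType) (P : probability T R) (K : T -> seq bool) : Prop :=
  forall (n : nat) (kn : seq bool), (1 <= n)%N -> size kn = n ->
    (0 < P (ev_prefix K n kn))%E ->
    fine (P (ev_prefix K n kn `&` ev_bit K n kn)) / fine (P (ev_prefix K n kn))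
      = 2^-1.

(* Main.v *)
Require Import Defs.
From HB Require Import structures.
From mathcomp Require Import all_boot all_order all_algebra.
From mathcomp Require Import all_classical all_reals all_analysis.
From mathcomp Require Import ring lra.
Import Order.TTheory GRing.Theory Num.Theory.
Local Open Scope classical_set_scope.
Local Open Scope ring_scope.

Section helpers.
Context (d : measure_display) (T : measurableType d) (R : realType)
  (P : probability T R) (K : T -> seq bool).
Hypothesis hK : forall k : seq bool, measurable (K @^-1` [set k]).

Lemma mpre (S : set (seq bool)) : measurable (K @^-1` S).
Proof.
have -> : K @^-1` S = \bigcup_k (K @^-1` ([set k] `&` S)).
  apply/seteqP; split => [w Sw|w [k _ [/= -> //]]].
  by exists (K w) => //.
apply: countable_bigcupT_measurable; first exact: countableP.
move=> k; case: (pselect (S k)) => Sk.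
  suff -> : [set k] `&` S = [set k] by [].
  by apply/seteqP; split => [x []//|x /= ->].
suff -> : [set k] `&` S = set0 by rewrite preimage_set0.
by apply/seteqP; split => [x [/= -> //]|].
Qed.

Definition mu (S : set (seq bool)) := P (K @^-1` S).
Definition r (S : set (seq bool)) : R := fine (mu S).

Lemma muE S : mu S = (r S)%:E.
Proof.
rewrite /r fineK // ge0_fin_numE ?measure_ge0 //.
by apply: (le_lt_trans (probability_le1 P (mpre S))); rewrite ltry.
Qed.

Lemma fin_mu S : mu S \is a fin_num.
Proof. by rewrite muE. Qed.

Lemma r_ge0 S : 0 <= r S.
Proof. by rewrite /r fine_ge0 // measure_ge0. Qed.

Lemma rU X Y : X `&` Y = set0 -> r (X `|` Y) = r X + r Y.
Proof.
move=> XY; have fX := fin_mu X; have fY := fin_mu Y; rewrite /mu in fX fY.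
rewrite /r /mu preimage_setU measureU; [by rewrite fineD|exact: mpre|exact: mpre|].
by rewrite -preimage_setI XY preimage_set0.
Qed.

Lemma r_le X Y : X `<=` Y -> r X <= r Y.
Proof.
move=> XY; rewrite -lee_fin -!muE /mu; apply: le_measure; rewrite ?inE; [exact: mpre|exact: mpre|].
exact: preimage_subset.
Qed.

Lemma r0 : r set0 = 0.
Proof. by rewrite /r /mu preimage_set0 measure0. Qed.

Lemma rT : r setT = 1.
Proof. by rewrite /r /mu preimage_setT probability_setT. Qed.


Lemma take_rcons_ext (v k : seq bool) b :
  take (size v).+1 k = rcons v b ->
  [/\ take (size v) k = v, (size v < size k)%N & nth false k (size v) = b].
Proof.
move=> H.
have szk : (size v < size k)%N.
  have := congr1 size H; rewrite size_take_min size_rcons => e.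
  by apply/negPn/negP; rewrite -leqNgt => hk; move: e; rewrite (minn_idPr _) ?(leq_trans hk) // => e; move: hk; rewrite e ltnn.
split => //.
  by rewrite -(take_takel k (leqnSn (size v))) H -cats1 take_size_cat.
by rewrite -(nth_take _ (ltnSn (size v))) H nth_rcons ltnn eqxx.
Qed.

Lemma take_ext_rcons (v k : seq bool) :
  (size v < size k)%N -> take (size v) k = v ->
  take (size v).+1 k = rcons v (nth false k (size v)).
Proof. by move=> szk H; rewrite (take_nth false szk) H. Qed.

Lemma split_take (v k : seq bool) :
  take (size v) k = v <->
  k = v \/ take (size v).+1 k = rcons v false \/ take (size v).+1 k = rcons v true.
Proof.
split.
  move=> H; case: (ltnP (size v) (size k)) => szk.
    right; rewrite (take_ext_rcons _ _ szk H).
    by case: (nth false k (size v)); [right|left].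
  by left; rewrite -H take_oversize.
case=> [->|[]]; first by rewrite take_size.
  by case/take_rcons_ext.
by case/take_rcons_ext.
Qed.

Lemma half_pow (m : nat) : ((2%:R : R) ^- m.+1) + (2%:R : R) ^- m.+1 = (2%:R : R) ^- m.
Proof.
have h : (2%:R : R) ^+ m != 0 by rewrite expf_neq0 // pnatr_eq0.
by rewrite exprS; field.
Qed.

Lemma r_split (Q : seq bool -> Prop) v :
  r [set k | Q k /\ take (size v) k = v] =
  r [set k | Q k /\ k = v] + r [set k | Q k /\ take (size v).+1 k = rcons v false]
  + r [set k | Q k /\ take (size v).+1 k = rcons v true].
Proof.
rewrite -!rU.
- congr r; apply/seteqP; split => k /=.
    case=> Qk H; case: (proj1 (split_take v k) H) => [e|[e|e]].
    - by left; left.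
    - by left; right.
    - by right.
  case=> [[]|] [Qk H]; split => //; apply/split_take; tauto.
- apply/seteqP; split => // k /= [[[_ ->]|[_ H1]] [_ H2]].
    by have [_ + _] := take_rcons_ext _ _ _ H2; rewrite ltnn.
  by move: H2; rewrite H1 => /(congr1 (fun s => nth false s (size v))); rewrite !nth_rcons ltnn eqxx.
- apply/seteqP; split => // k /= [[_ ->] [_ H2]].
  by have [_ + _] := take_rcons_ext _ _ _ H2; rewrite ltnn.
Qed.


Context (C : set (seq bool)).
Hypothesis hC : full_prefix_free R C.
Hypothesis hp : forall k : seq bool, C k -> P (K @^-1` [set k]) = ((2%:R : R) ^- size k)%:E.

Lemma r1 k : C k -> r [set k] = (2%:R : R) ^- size k.
Proof. by move=> Ck; rewrite /r /mu hp. Qed.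

Lemma rC : r C = 1.
Proof.
apply/le_anti/andP; split.
  by rewrite -rT; apply: r_le.
rewrite -lee_fin -muE; case: hC => _ <-.
apply: ge_ereal_sup => _ [X [finX XC] <-].
rewrite (@eq_fsbigr _ _ _ _ _ (fun x => P (K @^-1` [set x]))); last first.
  by move=> x; rewrite inE => Xx; rewrite hp //; apply: XC.
rewrite -measure_fin_bigcup //; last exact: trivIset_preimage1.
rewrite -preimage_bigcup /mu; apply: le_measure; rewrite ?inE; [exact: mpre|exact: mpre|].
by apply: preimage_subset => k [x Xx ->]; apply: XC.
Qed.

Lemma rIC S : r S = r (S `&` C).
Proof.
have e : r S = r (S `&` C) + r (S `&` ~` C).
  rewrite -rU; first by rewrite -setIUr setUv setIT.
  by rewrite setIACA setICr setI0.
have z : r (S `&` ~` C) <= 0.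
  have : r C + r (~` C) = 1 by rewrite -rU ?setUv ?rT // setICr.
  rewrite rC => h; have := @r_le (S `&` ~` C) (~` C) (fun x xs => proj2 xs); lra.
have := r_ge0 (S `&` ~` C); lra.
Qed.


Definition E v := [set k | C k /\ take (size v) k = v].
Definition Et n v := [set k | (C k /\ (size k <= size v + n)%N) /\ take (size v) k = v].

Lemma pf_ext v k : C v -> C k -> take (size v) k = v -> k = v.
Proof.
move=> Cv Ck e; case: hC => pf _; apply/esym/pf => //.
by rewrite prefixE e.
Qed.

Lemma pow_ge0 m : 0 <= (2%:R : R) ^- m.
Proof. by rewrite invr_ge0 exprn_ge0 // ler0n. Qed.

Lemma kraft_t n v : r (Et n v) <= (2%:R : R) ^- size v.
Proof.
elim: n v => [|n IH] v.
  case: (pselect (C v)) => Cv.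
    rewrite -(r1 v Cv); apply: r_le => k [[Ck _] e] /=; exact: pf_ext.
  have -> : Et 0 v = set0.
    apply/seteqP; split => // k [[Ck sk] e]; apply: Cv.
    by rewrite addn0 in sk; move: e; rewrite take_oversize // => <-.
  by rewrite r0 pow_ge0.
case: (pselect (C v)) => Cv.
  rewrite -(r1 v Cv); apply: r_le => k [[Ck _] e] /=; exact: pf_ext.
rewrite /Et (r_split (fun k => C k /\ (size k <= size v + n.+1)%N)).
have -> : [set k | (C k /\ (size k <= size v + n.+1)%N) /\ k = v] = set0.
  by apply/seteqP; split => // k [[Ck _] e]; apply: Cv; rewrite -e.
have := IH (rcons v false); have := IH (rcons v true).
rewrite /Et !size_rcons !addSnnS r0; have := half_pow (size v); lra.
Qed.

Lemma kraft v : r (E v) <= (2%:R : R) ^- size v.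
Proof.
have eqE : E v = \bigcup_n Et n v.
  apply/seteqP; split => k.
    by move=> [Ck e]; exists (size k) => //; split => //; split => //; apply: leq_addl.
  by move=> [n _ [[Ck _] e]].
rewrite -lee_fin -muE /mu eqE preimage_bigcup.
have nd : nondecreasing_seq (fun n => K @^-1` Et n v).
  move=> a b ab; apply/subsetPset => w [[Ck sk] tk]; split => //; split => //.
  by rewrite (leq_trans sk) // leq_add2l.
have H := @nondecreasing_cvg_mu _ _ _ P (fun n => K @^-1` Et n v) (fun n => mpre _)
  (bigcupT_measurable _ (fun n => mpre _)) nd.
rewrite -(cvg_lim _ H) //; apply: lime_le.
  by apply/cvg_ex; eexists; exact: H.
apply: nearW => n /=; have := kraft_t n v; rewrite -lee_fin -muE.
by [].
Qed.


Lemma E_split v : r (E v) = r [set k | C k /\ k = v] + r (E (rcons v false)) + r (E (rcons v true)).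
Proof. by rewrite /E !size_rcons (r_split C v). Qed.

Lemma good_r u : (forall j, (j < size u)%N -> ~ C (take j u)) ->
  r (E u) = (2%:R : R) ^- size u.
Proof.
elim/last_ind: u => [_|u b IH H].
  have -> : E [::] = C by apply/seteqP; split => [k []//|k Ck]; split => //; rewrite take0.
  by rewrite rC expr0 invr1.
have tk j : (j <= size u)%N -> take j (rcons u b) = take j u.
  by move=> hj; rewrite -cats1 takel_cat.
have IH' : r (E u) = (2%:R : R) ^- size u.
  apply: IH => j hj; rewrite -tk; last exact: ltnW.
  by apply: H; rewrite size_rcons; exact: ltnW.
have Cu : ~ C u.
  have := H (size u); rewrite tk // take_size size_rcons; apply; exact: ltnSn.
have z : r [set k | C k /\ k = u] = 0.
  have -> : [set k | C k /\ k = u] = set0.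
    by apply/seteqP; split => // k [Ck e]; apply: Cu; rewrite -e.
  exact: r0.
have e := E_split u; rewrite z IH' in e.
have k0 := kraft (rcons u false); have k1 := kraft (rcons u true).
rewrite !size_rcons in k0 k1 *; have hh := half_pow (size u).
move: e k0 k1 hh.
set x0 := r (E (rcons u false)); set x1 := r (E (rcons u true)).
set y := (2%:R : R) ^- (size u).+1; set y0 := (2%:R : R) ^- size u.
move=> ? ? ? ?; have [e0 e1] : x0 = y /\ x1 = y by split; lra.
by case: b {H tk}.
Qed.


Lemma E_empty u b j : (j <= size u)%N -> C (take j u) -> E (rcons u b) = set0.
Proof.
move=> hj Cc; apply/seteqP; split => // k [Ck H].
rewrite size_rcons in H; have [t s _] := take_rcons_ext _ _ _ H.
have sc : size (take j u) = j by rewrite size_takel.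
have ek : k = take j u.
  apply: pf_ext => //; rewrite sc -t take_takel //.
move: s; rewrite ek sc => s.
by move: (leq_trans s hj); rewrite ltnn.
Qed.

Lemma main_sec : randomly_stopped P K.
Proof.
move=> n kn n1 szkn Apos.
case/lastP: kn szkn Apos => [|u b] szkn Apos.
  by move: n1; rewrite -szkn.
rewrite size_rcons in szkn; subst n.
have tu : take (size u) (rcons u b) = u by rewrite -cats1 take_size_cat.
have nb : nth false (rcons u b) (size u) = b by rewrite nth_rcons ltnn eqxx.
set As := [set k | ((size u).+1 <= size k)%N /\ take (size u) k = u].
set ABs := [set k | (((size u).+1 <= size k)%N /\ take (size u) k = u) /\ nth false k (size u) = b].
have eA : ev_prefix K (size u).+1 (rcons u b) = K @^-1` As.
  by rewrite /ev_prefix /= tu.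
have eAB : ev_prefix K (size u).+1 (rcons u b) `&` ev_bit K (size u).+1 (rcons u b) = K @^-1` ABs.
  by rewrite /ev_prefix /ev_bit /= tu nb.
rewrite eAB eA; rewrite eA in Apos.
change (r ABs / r As = 2^-1).
have rAs : r As = r (E (rcons u false)) + r (E (rcons u true)).
  rewrite rIC -rU.
    congr r; apply/seteqP; split => k.
      move=> [[sk tk] Ck]; rewrite /E /= !size_rcons.
      have := take_ext_rcons u k sk tk.
      by case: (nth false k (size u)) => e; [right|left].
    rewrite /E /= !size_rcons.
    by case=> -[Ck H]; have [t s _] := take_rcons_ext _ _ _ H.
  apply/seteqP; split => // k [[_ H1] [_ H2]].
  rewrite !size_rcons in H1 H2.
  have [_ _ e1] := take_rcons_ext _ _ _ H1.
  have [_ _ e2] := take_rcons_ext _ _ _ H2.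
  by rewrite e1 in e2.
have rAB : r ABs = r (E (rcons u b)).
  rewrite rIC; congr r; apply/seteqP; split => k.
    move=> [[[sk tk] nk] Ck]; rewrite /E /= !size_rcons; split => //.
    by rewrite (take_ext_rcons u k sk tk) nk.
  rewrite /E /= !size_rcons => -[Ck H].
  by have [t s e] := take_rcons_ext _ _ _ H.
case: (pselect (exists j, (j <= size u)%N /\ C (take j u))) => [[j [hj Cc]]|ng].
  have h : r As = 0 by rewrite rAs (E_empty u false j hj Cc) (E_empty u true j hj Cc) r0 addr0.
  move: Apos; have -> : P (K @^-1` As) = (r As)%:E := muE As.
  by rewrite h ltxx.
have g b' : r (E (rcons u b')) = (2%:R : R) ^- (size u).+1.
  rewrite good_r ?size_rcons // => j hj Cj; apply: ng; exists j; split => //.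
  by move: Cj; rewrite -cats1 takel_cat.
rewrite rAB rAs !g.
have : 0 < (2%:R : R) ^- (size u).+1 by rewrite invr_gt0 exprn_gt0 // ltr0n.
set y := (2%:R : R) ^- (size u).+1 => hy.
have hyy : y + y != 0 by apply: lt0r_neq0; lra.
by field.
Qed.

End helpers.

Theorem proposition1 (d : measure_display) (T : measurableType d)
  (R : realType) (P : probability T R) (K : T -> seq bool)
  (C : set (seq bool)) :
  full_prefix_free R C ->
  (* K is a random variable (discrete: each {K = k} is an event) *)
  (forall k : seq bool, measurable (K @^-1` [set k])) ->
  (* probability mass function p_K(k) = 2^{-|k|} for k in C *)
  (forall k : seq bool, C k -> P (K @^-1` [set k]) = ((2%:R : R) ^- size k)%:E) ->
  randomly_stopped P K.
Proof.
move=> hC hK hp; exact: (@main_sec d T R P K hK C hC hp).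
Qed.
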